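(* Let $K$ be a field, $f\colon R\to S$ a morphism of Zinbiel algebras, $N$ a positive integer, and $\Theta_t=\sum_{i=0}^N\theta_it^i$ a deformation of order $N$ of $f$. Then the obstruction class $\mathrm{Ob}_\Theta=(\mathrm{Ob}_R;\mathrm{Ob}_S;\mathrm{Ob}_f)\in C^3_{\mathrm{Zinb}}(f,f)$ is a $3$-cocycle, i.e. $d^3_f\,\mathrm{Ob}_\Theta=0$.
   Context: A Zinbiel algebra over $K$ is a $K$-vector space $R$ with bilinear product $x\cdot y$ (also written $m_R(x,y)$) satisfying $(x\cdot y)\cdot z=x\cdot(y\cdot z)+x\cdot(z\cdot y)$. A morphism $f\colon R\to S$ is a linear map with $f(x\cdot y)=f(x)\cdot f(y)$. $R$ is a bimodule over itself, $S$ over itself, and $S$ is an $R$-bimodule via $r\cdot s=f(r)\cdot s$, $s\cdot r=s\cdot f(r)$. For a bimodule $A$ over $R$ and $1\le n\le4$, $C^n_{\mathrm{Zinb}}(R,A)=\mathrm{Hom}_K(R^{\otimes n},A)$ with $(d^1\varphi)(x,y)=x\cdot\varphi(y)-\varphi(x\cdot y)+\varphi(x)\cdot y$, $(d^2\varphi)(x,y,z)=x\cdot(\varphi(y,z)+\varphi(z,y))-\varphi(x\cdot y,z)+\varphi(x,y\cdot z+z\cdot y)-\varphi(x,y)\cdot z$, $(d^3\varphi)(x,y,z,w)=x\cdot\{\varphi(y,z,w)-\varphi(z,w,y)+\varphi(z,y,w)-\varphi(w,z,y)\}-\varphi(x\cdot y,z,w)+\varphi(x,y\cdot z+z\cdot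 y,w)-\varphi(x,y,z\cdot w+w\cdot z)+\varphi(x,y,z)\cdot w$. The deformation complex: $C^0_{\mathrm{Zinb}}(R,S)=0$, $d^0=0$, $C^n_{\mathrm{Zinb}}(f,f)=C^n_{\mathrm{Zinb}}(R,R)\times C^n_{\mathrm{Zinb}}(S,S)\times C^{n-1}_{\mathrm{Zinb}}(R,S)$ ($1\le n\le4$), $d^i_f(\xi;\pi;\varphi)=(d^i\xi;d^i\pi;f\xi-\pi f-d^{i-1}\varphi)$ with $(f\xi)(x_1,\dots)=f(\xi(x_1,\dots))$, $(\pi f)(x_1,\dots)=\pi(f(x_1),\dots)$. A deformation of order $N$ of $f$ is $\Theta_t=\sum_{i=0}^N\theta_it^i$ with $\theta_0=(m_R;m_S;f)$ (so $m_{R,0}=m_R$, $m_{S,0}=m_S$, $f_0=f$) and $\theta_i=(m_{R,i};m_{S,i};f_i)\in C^2_{\mathrm{Zinb}}(f,f)$, such that for all $0\le n\le N$: for $*=R,S$ and all $x,y,z\in *$, $\sum_{l=0}^n m_{*,l}(m_{*,n-l}(x,y),z)=\sum_{l=0}^n m_{*,l}(x,m_{*,n-l}(y,z)+m_{*,n-l}(z,y))$; and for all $x,y\in R$, $\sum_{i=0}^n f_i(m_{R,n-i}(x,y))=\sum_{i+j+k=n}m_{S,i}(f_j(x),f_k(y))$ (indices $\ge0$). The obstruction class of such $\Theta_t$ is $\mathrm{Ob}_\Theta=(\mathrm{Ob}_R;\mathrm{Ob}_S;\mathrm{Ob}_f)$ where, for $*=R,S$ and $x,y,z\in *$, $\mathrm{Ob}_*(x,y,z)=\sum_{i=1}^N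 m_{*,i}(m_{*,N+1-i}(x,y),z)-\sum_{i=1}^N m_{*,i}(x,m_{*,N+1-i}(y,z)+m_{*,N+1-i}(z,y))$, and for $x,y\in R$, $\mathrm{Ob}_f(x,y)=\sum' m_{S,i}(f_j(x),f_k(y))-\sum_{i=1}^N f_i(m_{R,N+1-i}(x,y))$, where $\sum'$ runs over all triples of integers $i,j,k\ge0$ with $i+j+k=N+1$ and at least two of $i,j,k$ positive (equivalently, $i,j,k\le N$). *)

(* Defs.v *)
From HB Require Import structures.
From mathcomp Require Import all_boot all_order all_algebra.
Set Implicit Arguments. Unset Strict Implicit. Unset Printing Implicit Defensive.
Import GRing.Theory.
Local Open Scope ring_scope.

Section ZinbDefs.
Variable K : fieldType.

Definition klinear (U V : lmodType K) (g : U -> V) : Prop :=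
  forall (a : K) (x y : U), g (a *: x + y) = a *: g x + g y.

Definition kbilinear (U V W : lmodType K) (m : U -> V -> W) : Prop :=
  (forall x, klinear (m x)) /\ (forall y, klinear (fun x => m x y)).

Definition zinbiel_identity (R : lmodType K) (m : R -> R -> R) : Prop :=
  forall x y z, m (m x y) z = m x (m y z) + m x (m z y).

Definition zinbiel_algebra (R : lmodType K) (m : R -> R -> R) : Prop :=
  kbilinear m /\ zinbiel_identity m.

Definition zinbiel_morphism (R S : lmodType K) (mR : R -> R -> R)
  (mS : S -> S -> S) (f : R -> S) : Prop :=
  klinear f /\ forall x y, f (mR x y) = mS (f x) (f y).

(* Coboundaries d^2 and d^3 of C^*_Zinb(R, A), for an R-bimodule A given by
   the left action [l] and right action [r]. *)
Definition zd2 (R A : lmodType K) (mR : R -> R -> R) (l : R -> A -> A)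
  (r : A -> R -> A) (phi : R -> R -> A) : R -> R -> R -> A :=
  fun x y z => l x (phi y z + phi z y) - phi (mR x y) z
               + phi x (mR y z + mR z y) - r (phi x y) z.

Definition zd3 (R A : lmodType K) (mR : R -> R -> R) (l : R -> A -> A)
  (r : A -> R -> A) (phi : R -> R -> R -> A) : R -> R -> R -> R -> A :=
  fun x y z w =>
    l x (phi y z w - phi z w y + phi z y w - phi w z y)
    - phi (mR x y) z w + phi x (mR y z + mR z y) w
    - phi x y (mR z w + mR w z) + r (phi x y z) w.

Definition zinb_deformation (R S : lmodType K) (mR : R -> R -> R)
  (mS : S -> S -> S) (f : R -> S) (N : nat)
  (mRs : nat -> R -> R -> R) (mSs : nat -> S -> S -> S) (fs : nat -> R -> S)
  : Prop :=
  [/\ mRs 0%N = mR, mSs 0%N = mS & fs 0%N = f] /\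
  [/\ (forall i, (i <= N)%N -> [/\ kbilinear (mRs i), kbilinear (mSs i)
                                  & klinear (fs i)]),
      (forall n, (n <= N)%N -> forall x y z : R,
          \sum_(l < n.+1) mRs l (mRs (n - l)%N x y) z =
          \sum_(l < n.+1) mRs l x (mRs (n - l)%N y z + mRs (n - l)%N z y)),
      (forall n, (n <= N)%N -> forall x y z : S,
          \sum_(l < n.+1) mSs l (mSs (n - l)%N x y) z =
          \sum_(l < n.+1) mSs l x (mSs (n - l)%N y z + mSs (n - l)%N z y))
    & (forall n, (n <= N)%N -> forall x y : R,
          \sum_(i < n.+1) fs i (mRs (n - i)%N x y) =
          \sum_(i < n.+1) \sum_(j < n.+1) \sum_(k < n.+1 | (i + j + k == n)%N)
             mSs i (fs j x) (fs k y))].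

Definition obs_alg (T : lmodType K) (ms : nat -> T -> T -> T) (N : nat)
  : T -> T -> T -> T :=
  fun x y z =>
    \sum_(1 <= i < N.+1) ms i (ms (N.+1 - i)%N x y) z
    - \sum_(1 <= i < N.+1) ms i x (ms (N.+1 - i)%N y z + ms (N.+1 - i)%N z y).

Definition obs_mor (R S : lmodType K) (mRs : nat -> R -> R -> R)
  (mSs : nat -> S -> S -> S) (fs : nat -> R -> S) (N : nat) : R -> R -> S :=
  fun x y =>
    \sum_(i < N.+1) \sum_(j < N.+1) \sum_(k < N.+1 | (i + j + k == N.+1)%N)
        mSs i (fs j x) (fs k y)
    - \sum_(1 <= i < N.+1) fs i (mRs (N.+1 - i)%N x y).

End ZinbDefs.

(* Main.v *)
Require Import Defs.
From HB Require Import structures.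
From mathcomp Require Import all_boot all_order all_algebra.
From mathcomp Require Import boolp functions.
Import GRing.Theory.
Set Implicit Arguments. Unset Strict Implicit.
Local Open Scope ring_scope.

Ltac canc :=
  rewrite -[LHS]addr0 -?addrA;
  repeat match goal with |- context [ - ?t ] =>
    rewrite ?(addrCA _ (-t)) ?(addrCA _ t) addNKr end; done.
Ltac zeq := apply/eqP; rewrite -subr_eq0; apply/eqP; rewrite ?(opprD, opprK, oppr0, addr0); canc.

Lemma dbl0 (V : zmodType) (x : V) : x = x + x -> x = 0.
Proof. by move/(congr1 (fun y => y - x)); rewrite addrK subrr => ->. Qed.

Section Dev.
Variable N : nat.

Section Seq.
Variable T : zmodType.
Implicit Types u v : nat -> T.

Definition hat (c : T) : nat -> T := fun n => if n == 0%N then c else 0.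
Definition sh (u : nat -> T) : nat -> T :=
  fun n => if n is n'.+1 then (if (n' <= N)%N then u n' else 0) else 0.
Definition shn j (u : nat -> T) := iter j sh u.

Lemma addfE (u v : nat -> T) n : (u + v) n = u n + v n. Proof. by []. Qed.
Lemma oppfE (u : nat -> T) n : (- u) n = - u n. Proof. by []. Qed.
Lemma zerofE n : (0 : nat -> T) n = 0. Proof. by []. Qed.
Lemma sumfE I (r : seq I) (Q : pred I) (F : I -> nat -> T) n :
  (\sum_(i <- r | Q i) F i) n = \sum_(i <- r | Q i) F i n.
Proof. by elim/big_rec2: _ => // i y1 y2 _ <-. Qed.

Lemma shnSE j u n : shn j.+1 u n =
  if ((j < n) && (n <= N.+1))%N then u (n - j.+1)%N else 0.
Proof.
elim: j n => [|j IH] [|n] //=.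
  by rewrite subn1 /=; case: ifP.
change (sh (shn j u) n) with (shn j.+1 u n); rewrite IH ltnS; case: (ltnP j n) => //= jn.
all: rewrite ?ltnS; case: ifP => nN; first [by rewrite (leqW nN) subSS | by [] | by case: ifP | idtac].
Qed.

Definition trunc (u : nat -> T) := forall n, (N.+1 < n)%N -> u n = 0.

Lemma shnE j u n : trunc u -> shn j u n =
  if ((j <= n) && (n <= N.+1))%N then u (n - j)%N else 0.
Proof.
case: j => [|j] tu; last by rewrite shnSE.
rewrite /= subn0; case: leqP => //= /tu //.
Qed.

Lemma shD u v : sh (u + v) = sh u + sh v.
Proof. by apply: funext => -[|n]; rewrite /= !addfE /= ?addr0 //; case: ifP; rewrite ?addr0. Qed.
Lemma sh0 : sh 0 = 0.
Proof. by apply: funext => -[|n] //=; case: ifP. Qed.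
Lemma shN u : sh (- u) = - sh u.
Proof. by apply: funext => -[|n]; rewrite /= !oppfE /= ?oppr0 //; case: ifP; rewrite ?oppr0. Qed.
Lemma shnD j u v : shn j (u + v) = shn j u + shn j v.
Proof. by elim: j => //= j ->; rewrite shD. Qed.
Lemma shn0 j : shn j 0 = 0.
Proof. by elim: j => //= j ->; rewrite sh0. Qed.
Lemma shnN j u : shn j (- u) = - shn j u.
Proof. by elim: j => //= j ->; rewrite shN. Qed.
Lemma shn_sum j I (r : seq I) (Q : pred I) (F : I -> nat -> T) :
  shn j (\sum_(i <- r | Q i) F i) = \sum_(i <- r | Q i) shn j (F i).
Proof. exact: (big_morph (shn j) (shnD j) (shn0 j)). Qed.
Lemma sh_sum I (r : seq I) (Q : pred I) (F : I -> nat -> T) :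
  sh (\sum_(i <- r | Q i) F i) = \sum_(i <- r | Q i) sh (F i).
Proof. exact: (big_morph sh shD sh0). Qed.
Lemma shn_shn j k u : shn j (shn k u) = shn (j + k) u.
Proof. by rewrite /shn iterD. Qed.
Lemma shn_big j u : (N.+1 < j)%N -> shn j u = 0.
Proof.
case: j => // j jN; apply: funext => n; rewrite shnSE zerofE.
by case: ltnP => //= jn; rewrite leqNgt (leq_trans jN jn).
Qed.
Lemma hatS c j : hat c j.+1 = 0. Proof. by []. Qed.
Lemma hat0E c : hat c 0%N = c. Proof. by []. Qed.
Lemma hat0R c : hat c 0 = c. Proof. by []. Qed.
Lemma hat_trunc c : trunc (hat c).
Proof. by move=> [|n]. Qed.
Lemma hatD a b : hat (a + b) = hat a + hat b.
Proof. by apply: funext => -[|n]; rewrite /= !addfE /= ?addr0. Qed.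
Lemma hat0 : hat 0 = 0.
Proof. by apply: funext => -[|n]. Qed.
Lemma hatN a : hat (- a) = - hat a.
Proof. by apply: funext => -[|n]; rewrite /= !oppfE /= ?oppr0. Qed.

Definition top c := shn N.+1 (hat c).
Lemma top_only0 u : shn N.+1 u = top (u 0%N).
Proof.
apply: funext => n; rewrite /top !shnSE.
case: ifP => // /andP[Nn nN]; have -> : n = N.+1 by apply/eqP; rewrite eqn_leq nN Nn.
by rewrite subnn. Qed.
Lemma top_coef c : top c N.+1 = c.
Proof. by rewrite /top shnSE ltnSn /= subnn. Qed.
Lemma shn_top j c : shn j.+1 (top c) = 0.
Proof. by rewrite /top shn_shn shn_big // addSn ltnS leq_addl. Qed.
Lemma topD a b : top (a + b) = top a + top b.
Proof. by rewrite /top hatD shnD. Qed.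
Lemma topN a : top (- a) = - top a.
Proof. by rewrite /top hatN shnN. Qed.
Lemma top0 : top 0 = 0.
Proof. by rewrite /top hat0 shn0. Qed.
Lemma shn_coef0 j u : shn j.+1 u 0%N = 0.
Proof. by rewrite shnSE. Qed.

Definition tr (u : nat -> T) := \sum_(0 <= j < N.+2) shn j (hat (u j)).
Lemma tr_coef u j : (j <= N.+1)%N -> tr u j = u j.
Proof.
move=> jN; rewrite /tr sumfE (bigD1_seq j) ?mem_index_iota ?iota_uniq //=.
rewrite (shnE _ _ (hat_trunc _)) leqnn jN subnn /= big1 ?addr0 // => i ij.
rewrite (shnE _ _ (hat_trunc _)); case: ifP => // /andP[ij' _].
by rewrite /hat subn_eq0; case: ifP => // ji; case/eqP: ij; apply/eqP; rewrite eqn_leq ij' ji.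
Qed.
End Seq.

Section Conv.
Variable T : zmodType.
Implicit Types u v w : nat -> T.
Variable mm : nat -> T -> T -> T.
Hypothesis mmDl : forall i a b c, mm i (a + b) c = mm i a c + mm i b c.
Hypothesis mmDr : forall i a b c, mm i c (a + b) = mm i c a + mm i c b.

Lemma mm0l i c : mm i 0 c = 0.
Proof. by apply: dbl0; rewrite -mmDl addr0. Qed.
Lemma mm0r i c : mm i c 0 = 0.
Proof. by apply: dbl0; rewrite -mmDr addr0. Qed.
Lemma mmNl i a c : mm i (- a) c = - mm i a c.
Proof. by apply/eqP; rewrite -addr_eq0 -mmDl addNr mm0l. Qed.
Lemma mmNr i a c : mm i c (- a) = - mm i c a.
Proof. by apply/eqP; rewrite -addr_eq0 -mmDr addNr mm0r. Qed.

Definition M0 a b : nat -> T := fun n => if (n <= N.+1)%N then mm n a b else 0.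
Definition M u v : nat -> T :=
  \sum_(0 <= j < N.+2) \sum_(0 <= k < N.+2) shn (j + k)%N (M0 (u j) (v k)).

Lemma M0Dl a b c : M0 (a + b) c = M0 a c + M0 b c.
Proof. by apply: funext => n; rewrite addfE /M0; case: ifP; rewrite ?mmDl ?addr0. Qed.
Lemma M0Dr a b c : M0 c (a + b) = M0 c a + M0 c b.
Proof. by apply: funext => n; rewrite addfE /M0; case: ifP; rewrite ?mmDr ?addr0. Qed.
Lemma M0Nl a c : M0 (- a) c = - M0 a c.
Proof. by apply: funext => n; rewrite oppfE /M0; case: ifP; rewrite ?mmNl ?oppr0. Qed.
Lemma M0Nr a c : M0 c (- a) = - M0 c a.
Proof. by apply: funext => n; rewrite oppfE /M0; case: ifP; rewrite ?mmNr ?oppr0. Qed.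
Lemma M00l c : M0 0 c = 0.
Proof. by apply: funext => n; rewrite /M0; case: ifP; rewrite ?mm0l. Qed.
Lemma M00r c : M0 c 0 = 0.
Proof. by apply: funext => n; rewrite /M0; case: ifP; rewrite ?mm0r. Qed.
Lemma M0_trunc a b : trunc (M0 a b).
Proof. by move=> n; rewrite /M0 ltnNge => /negbTE ->. Qed.

Lemma MDl u1 u2 v : M (u1 + u2) v = M u1 v + M u2 v.
Proof.
rewrite /M -big_split; apply: eq_bigr => j _; rewrite -big_split.
by apply: eq_bigr => k _; rewrite addfE M0Dl shnD.
Qed.
Lemma MDr u v1 v2 : M u (v1 + v2) = M u v1 + M u v2.
Proof.
rewrite /M -big_split; apply: eq_bigr => j _; rewrite -big_split.
by apply: eq_bigr => k _; rewrite addfE M0Dr shnD.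
Qed.
Lemma MNl u v : M (- u) v = - M u v.
Proof.
rewrite /M -sumrN; apply: eq_bigr => j _; rewrite -sumrN.
by apply: eq_bigr => k _; rewrite oppfE M0Nl shnN.
Qed.
Lemma MNr u v : M u (- v) = - M u v.
Proof.
rewrite /M -sumrN; apply: eq_bigr => j _; rewrite -sumrN.
by apply: eq_bigr => k _; rewrite oppfE M0Nr shnN.
Qed.
Lemma M0l v : M 0 v = 0.
Proof. by apply: dbl0; rewrite -MDl addr0. Qed.
Lemma M0r v : M v 0 = 0.
Proof. by apply: dbl0; rewrite -MDr addr0. Qed.

Lemma sh_helper (A : zmodType) (w : nat -> A) (H : A -> nat -> T) c : H 0 = 0 ->
  \sum_(0 <= k < N.+2) shn (k + c)%N (H (sh w k)) =
  sh (\sum_(0 <= k < N.+2) shn (k + c)%N (H (w k))).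
Proof.
move=> H0; rewrite big_nat_recl // [X in _ = sh X]big_nat_recr //= H0 shn0 add0r.
rewrite shD sh_sum.
have -> : sh (shn (N.+1 + c)%N (H (w N.+1))) = 0.
  by rewrite -[sh _]/(shn (N.+1 + c)%N.+1 _) shn_big // ltnS leq_addr.
rewrite addr0; apply: eq_big_nat => k /andP[_ kN].
by rewrite ltnS in kN; rewrite kN.
Qed.

Lemma Mshl u v : M (sh u) v = sh (M u v).
Proof.
rewrite /M exchange_big [in RHS]exchange_big sh_sum; apply: eq_bigr => k _.
exact: (@sh_helper _ u (fun a => M0 a (v k)) k (M00l _)).
Qed.
Lemma Mshr u v : M u (sh v) = sh (M u v).
Proof.
rewrite /M sh_sum; apply: eq_bigr => j _.
under eq_bigr do rewrite addnC.
under [in RHS]eq_bigr do rewrite addnC.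
exact: (@sh_helper _ v (fun b => M0 (u j) b) j (M00r _)).
Qed.
Lemma Mshnl j u v : M (shn j u) v = shn j (M u v).
Proof. by elim: j => //= j IH; rewrite Mshl IH. Qed.
Lemma Mshnr j u v : M u (shn j v) = shn j (M u v).
Proof. by elim: j => //= j IH; rewrite Mshr IH. Qed.

Lemma Mhatl a v : M (hat a) v = \sum_(0 <= k < N.+2) shn k (M0 a (v k)).
Proof.
rewrite /M big_nat_recl // [X in _ + X](_ : _ = 0) ?addr0 //.
by apply: big1 => j _; apply: big1 => k _; rewrite hatS M00l shn0.
Qed.
Lemma Mhatr u b : M u (hat b) = \sum_(0 <= j < N.+2) shn j (M0 (u j) b).
Proof.
rewrite /M; apply: eq_bigr => j _; rewrite big_nat_recl // [X in _ + X](_ : _ = 0) ?addr0 ?addn0 //.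
by apply: big1 => k _; rewrite hatS M00r shn0.
Qed.
Lemma Mdecl u v : M u v = \sum_(0 <= j < N.+2) shn j (M (hat (u j)) v).
Proof.
under [RHS]eq_bigr do rewrite Mhatl shn_sum.
by rewrite /M; apply: eq_bigr => j _; apply: eq_bigr => k _; rewrite shn_shn.
Qed.
Lemma Mdecr u v : M u v = \sum_(0 <= k < N.+2) shn k (M u (hat (v k))).
Proof.
under [RHS]eq_bigr do rewrite Mhatr shn_sum.
rewrite /M exchange_big; apply: eq_bigr => k _; apply: eq_bigr => j _.
by rewrite shn_shn addnC.
Qed.
Lemma Mtr_l u v : M u v = M (tr u) v.
Proof.
rewrite Mdecl [RHS]Mdecl; apply: eq_big_nat => j /andP[_ jN].
by rewrite tr_coef.
Qed.
Lemma Mtr_r u v : M u v = M u (tr v).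
Proof.
rewrite Mdecr [RHS]Mdecr; apply: eq_big_nat => j /andP[_ jN].
by rewrite tr_coef.
Qed.
Lemma Mcoef0 u v : M u v 0%N = mm 0 (u 0%N) (v 0%N).
Proof.
rewrite /M sumfE big_nat_recl // [X in _ + X = _](_ : _ = 0) ?addr0; last first.
  by apply: big1 => j _; rewrite sumfE; apply: big1 => k _; rewrite addSn shn_coef0.
rewrite sumfE big_nat_recl // [X in _ + X = _](_ : _ = 0) ?addr0 //.
by apply: big1 => k _; rewrite add0n shn_coef0.
Qed.
Lemma Mcoef0R u v : M u v 0 = mm 0 (u 0%N) (v 0%N).
Proof. exact: Mcoef0. Qed.
Lemma Mtopl c v : M (top c) v = top (mm 0 c (v 0%N)).
Proof. by rewrite /top Mshnl top_only0 Mcoef0. Qed.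
Lemma Mtopr u c : M u (top c) = top (mm 0 (u 0%N) c).
Proof. by rewrite /top Mshnr top_only0 Mcoef0. Qed.

Definition Phi u v w := M (M u v) w - M u (M v w + M w v).

Lemma Phi_tr u v w : Phi u v w = Phi (tr u) (tr v) (tr w).
Proof.
have e1 x y : M x y = M (tr x) (tr y) by rewrite Mtr_l Mtr_r.
rewrite /Phi (Mtr_r (M u v) w) (e1 u v) (Mtr_l u) (e1 v w) (e1 w v).
by [].
Qed.

Lemma PhiD1 u1 u2 v w : Phi (u1 + u2) v w = Phi u1 v w + Phi u2 v w.
Proof. rewrite /Phi !(MDl, MDr); zeq. Qed.
Lemma PhiD2 u v1 v2 w : Phi u (v1 + v2) w = Phi u v1 w + Phi u v2 w.
Proof. rewrite /Phi !(MDl, MDr); zeq. Qed.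
Lemma PhiD3 u v w1 w2 : Phi u v (w1 + w2) = Phi u v w1 + Phi u v w2.
Proof. rewrite /Phi !(MDl, MDr); zeq. Qed.
Lemma Phi01 v w : Phi 0 v w = 0.
Proof. by apply: dbl0; rewrite -PhiD1 addr0. Qed.
Lemma Phi02 u w : Phi u 0 w = 0.
Proof. by apply: dbl0; rewrite -PhiD2 addr0. Qed.
Lemma Phi03 u v : Phi u v 0 = 0.
Proof. by apply: dbl0; rewrite -PhiD3 addr0. Qed.
Lemma Phish1 j u v w : Phi (shn j u) v w = shn j (Phi u v w).
Proof. by rewrite /Phi !(Mshnl, Mshnr) shnD shnN. Qed.
Lemma Phish2 j u v w : Phi u (shn j v) w = shn j (Phi u v w).
Proof. by rewrite /Phi !(Mshnl, Mshnr) -shnD Mshnr shnD shnN. Qed.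
Lemma Phish3 j u v w : Phi u v (shn j w) = shn j (Phi u v w).
Proof. by rewrite /Phi !(Mshnl, Mshnr) -shnD Mshnr shnD shnN. Qed.

Variable Ob : T -> T -> T -> T.
Hypothesis Hhat : forall a b c, Phi (hat a) (hat b) (hat c) = top (Ob a b c).

Lemma P3 a b w : Phi (hat a) (hat b) (tr w) = top (Ob a b (w 0%N)).
Proof.
rewrite /tr (big_morph (fun x => Phi _ _ x) (PhiD3 _ _) (Phi03 _ _)).
rewrite big_nat_recl // big1 ?addr0 => [|j _]; first by rewrite Hhat.
by rewrite Phish3 Hhat shn_top.
Qed.
Lemma P2 a v w : Phi (hat a) (tr v) (tr w) = top (Ob a (v 0%N) (w 0%N)).
Proof.
rewrite [tr v]/tr (big_morph (fun x => Phi _ x _) (fun a b => PhiD2 _ a b _) (Phi02 _ _)).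
rewrite big_nat_recl // big1 ?addr0 => [|j _]; first by rewrite P3.
by rewrite Phish2 P3 shn_top.
Qed.
Lemma Phi_gen u v w : Phi u v w = top (Ob (u 0%N) (v 0%N) (w 0%N)).
Proof.
rewrite Phi_tr [tr u]/tr (big_morph (fun x => Phi x _ _) (fun a b => PhiD1 a b _ _) (Phi01 _ _)).
rewrite big_nat_recl // big1 ?addr0 => [|j _]; first by rewrite P2.
by rewrite Phish1 P2 shn_top.
Qed.

End Conv.
Section Morph.
Variables T1 T2 : zmodType.
Variable mr : nat -> T1 -> T1 -> T1.
Hypothesis mrDl : forall i a b c, mr i (a + b) c = mr i a c + mr i b c.
Hypothesis mrDr : forall i a b c, mr i c (a + b) = mr i c a + mr i c b.
Variable ms : nat -> T2 -> T2 -> T2.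
Hypothesis msDl : forall i a b c, ms i (a + b) c = ms i a c + ms i b c.
Hypothesis msDr : forall i a b c, ms i c (a + b) = ms i c a + ms i c b.
Variable ff : nat -> T1 -> T2.
Hypothesis ffD : forall i a b, ff i (a + b) = ff i a + ff i b.

Lemma ff0 i : ff i 0 = 0.
Proof. by apply: dbl0; rewrite -ffD addr0. Qed.
Lemma ffN i a : ff i (- a) = - ff i a.
Proof. by apply/eqP; rewrite -addr_eq0 -ffD addNr ff0. Qed.

Definition F0 a : nat -> T2 := fun n => if (n <= N.+1)%N then ff n a else 0.
Definition F (u : nat -> T1) : nat -> T2 := \sum_(0 <= j < N.+2) shn j (F0 (u j)).

Lemma F0D a b : F0 (a + b) = F0 a + F0 b.
Proof. by apply: funext => n; rewrite addfE /F0; case: ifP; rewrite ?ffD ?addr0. Qed.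
Lemma F0N a : F0 (- a) = - F0 a.
Proof. by apply: funext => n; rewrite oppfE /F0; case: ifP; rewrite ?ffN ?oppr0. Qed.
Lemma F00 : F0 0 = 0.
Proof. by apply: funext => n; rewrite /F0; case: ifP; rewrite ?ff0. Qed.
Lemma FD u v : F (u + v) = F u + F v.
Proof. by rewrite /F -big_split; apply: eq_bigr => j _; rewrite addfE F0D shnD. Qed.
Lemma FN u : F (- u) = - F u.
Proof. by rewrite /F -sumrN; apply: eq_bigr => j _; rewrite oppfE F0N shnN. Qed.
Lemma F_0 : F 0 = 0.
Proof. by apply: dbl0; rewrite -FD addr0. Qed.
Lemma Fsh u : F (sh u) = sh (F u).
Proof.
rewrite /F; under eq_bigr do rewrite -[X in shn X]addn0.
under [in RHS]eq_bigr do rewrite -[X in shn X]addn0.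
exact: (@sh_helper T2 T1 u F0 0 F00).
Qed.
Lemma Fshn j u : F (shn j u) = shn j (F u).
Proof. by elim: j => //= j IH; rewrite Fsh IH. Qed.
Lemma Fhat a : F (hat a) = F0 a.
Proof.
rewrite /F big_nat_recl // [X in _ + X](_ : _ = 0) ?addr0 //.
by apply: big1 => j _; rewrite hatS F00 shn0.
Qed.
Lemma F_tr u : F u = F (tr u).
Proof.
by rewrite /F; apply: eq_big_nat => j /andP[_ jN]; rewrite tr_coef.
Qed.
Lemma Fcoef0 u : F u 0%N = ff 0 (u 0%N).
Proof.
rewrite /F sumfE big_nat_recl // [X in _ + X = _](_ : _ = 0) ?addr0 //.
by apply: big1 => j _; rewrite shn_coef0.
Qed.
Lemma Ftop c : F (top c) = top (ff 0 c).
Proof. by rewrite /top Fshn top_only0 Fcoef0. Qed.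

Definition D u v := F (M mr u v) - M ms (F u) (F v).

Lemma D_tr u v : D u v = D (tr u) (tr v).
Proof.
rewrite /D (Mtr_l mrDl u) (Mtr_r mrDr _ v) (F_tr u) (F_tr v).
by [].
Qed.
Lemma DD1 u1 u2 v : D (u1 + u2) v = D u1 v + D u2 v.
Proof. rewrite /D (MDl mrDl) FD FD (MDl msDl); zeq. Qed.
Lemma DD2 u v1 v2 : D u (v1 + v2) = D u v1 + D u v2.
Proof. rewrite /D (MDr mrDr) FD FD (MDr msDr); zeq. Qed.
Lemma D01 v : D 0 v = 0.
Proof. by apply: dbl0; rewrite -DD1 addr0. Qed.
Lemma D02 u : D u 0 = 0.
Proof. by apply: dbl0; rewrite -DD2 addr0. Qed.
Lemma Dsh1 j u v : D (shn j u) v = shn j (D u v).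
Proof. by rewrite /D (Mshnl mrDl) !Fshn (Mshnl msDl) shnD shnN. Qed.
Lemma Dsh2 j u v : D u (shn j v) = shn j (D u v).
Proof. by rewrite /D (Mshnr mrDr) !Fshn (Mshnr msDr) shnD shnN. Qed.

Variable Od : T1 -> T1 -> T2.
Hypothesis Dhat : forall a b, D (hat a) (hat b) = top (Od a b).

Lemma D2 a v : D (hat a) (tr v) = top (Od a (v 0%N)).
Proof.
rewrite /tr (big_morph (fun x => D _ x) (DD2 _) (D02 _)).
rewrite big_nat_recl // big1 ?addr0 => [|j _]; first by rewrite Dhat.
by rewrite Dsh2 Dhat shn_top.
Qed.
Lemma D_gen u v : D u v = top (Od (u 0%N) (v 0%N)).
Proof.
rewrite D_tr [tr u]/tr (big_morph (fun x => D x _) (fun a b => DD1 a b _) (D01 _)).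
rewrite big_nat_recl // big1 ?addr0 => [|j _]; first by rewrite D2.
by rewrite Dsh1 D2 shn_top.
Qed.
End Morph.

Lemma rev_sum (V : zmodType) n (G : nat -> nat -> V) :
  \sum_(j < n.+1) G (n - j)%N j = \sum_(i < n.+1) G i (n - i)%N.
Proof.
rewrite (reindex_inj rev_ord_inj) /=; apply: eq_bigr => i _.
by rewrite subSS subKn // -ltnS.
Qed.

Lemma shsum_coef (V : zmodType) (Y : nat -> nat -> V) n :
  (forall j, trunc (Y j)) -> (n <= N.+1)%N ->
  (\sum_(0 <= j < N.+2) shn j (Y j)) n = \sum_(j < n.+1) Y j (n - j)%N.
Proof.
move=> tY nN; rewrite sumfE.
under eq_bigr => j _ do rewrite (shnE _ _ (tY j)) nN andbT.
rewrite -big_mkcond /= -(big_mkord xpredT (fun j => Y j (n - j)%N)) (big_nat_widen _ _ _ _ _ (_ : n.+1 <= N.+2)%N) //.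
Qed.

Lemma pick_sum (V : zmodType) n c (H : nat -> V) :
  \sum_(i < n.+1) (if (i + c == n)%N then H i else 0) =
  if (c <= n)%N then H (n - c)%N else 0.
Proof.
case: leqP => cn.
  have hi : (n - c < n.+1)%N by rewrite ltnS leq_subr.
  rewrite (bigD1 (Ordinal hi)) //= subnK // eqxx big1 ?addr0 // => i /eqP ic.
  case: eqP => // e; case: ic; apply: val_inj => /=.
  by apply/eqP; rewrite -(eqn_add2r c) subnK // e.
rewrite big1 // => i _; case: eqP => // e.
by move: cn; rewrite ltnNge -{1}e leq_addl.
Qed.

Lemma pick_sum3 (V : zmodType) n j k (H : nat -> V) :
  \sum_(i < n.+1) (if (i + j + k == n)%N then H i else 0) =
  if (j + k <= n)%N then H (n - j - k)%N else 0.
Proof. by rewrite -subnDA -pick_sum; apply: eq_bigr => i _; rewrite addnA. Qed.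

Lemma tri (V : zmodType) n (G : nat -> nat -> nat -> V) :
  \sum_(j < n.+1) \sum_(k < (n - j).+1) G (n - j - k)%N j k =
  \sum_(i < n.+1) \sum_(j < n.+1) \sum_(k < n.+1 | (i + j + k == n)%N) G i j k.
Proof.
rewrite exchange_big /=; apply: eq_bigr => j _.
under [RHS]eq_bigr => i _ do rewrite big_mkcond /=.
rewrite [RHS]exchange_big /=.
under [RHS]eq_bigr => k _ do rewrite (pick_sum3 n j k (fun i => G i j k)).
rewrite -big_mkcond /=.
  rewrite -(big_mkord xpredT (fun k => G (n - j - k)%N j k)).
  rewrite (big_nat_widen _ _ _ _ _ (_ : (n - j).+1 <= n.+1)%N) ?ltnS ?leq_subr //.
  rewrite big_mkord; apply: eq_bigl => k /=.
  by rewrite ltnS leq_subRL // -ltnS.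
Qed.

Section Trunc.
Variable T : zmodType.
Lemma truncD (u v : nat -> T) : trunc u -> trunc v -> trunc (u + v).
Proof. by move=> tu tv n nN; rewrite addfE tu ?tv ?addr0. Qed.
Lemma truncN (u : nat -> T) : trunc u -> trunc (- u).
Proof. by move=> tu n nN; rewrite oppfE tu ?oppr0. Qed.
Lemma trunc_shsum I r (Q : pred I) (j : I -> nat) (Y : I -> nat -> T) :
  (forall i, trunc (Y i)) -> trunc (\sum_(i <- r | Q i) shn (j i) (Y i)).
Proof.
move=> tY n nN; rewrite sumfE big1 // => i _.
by rewrite (shnE _ _ (tY i)) [(n <= _)%N]leqNgt nN andbF.
Qed.
Lemma trunc_top (c : T) : trunc (top c).
Proof. by move=> n nN; rewrite /top shnSE [(n <= _)%N]leqNgt nN andbF. Qed.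
End Trunc.

Lemma trunc_M (T : zmodType) (mm : nat -> T -> T -> T) u v : trunc (M mm u v).
Proof.
move=> n nN; rewrite /M sumfE big1 // => j _; rewrite sumfE big1 // => k _.
by rewrite (shnE _ _ (M0_trunc _ _ _)) [(n <= _)%N]leqNgt nN andbF.
Qed.

Section Hat.
Variable T : zmodType.
Variable mm : nat -> T -> T -> T.
Hypothesis mmDl : forall i a b c, mm i (a + b) c = mm i a c + mm i b c.
Hypothesis mmDr : forall i a b c, mm i c (a + b) = mm i c a + mm i c b.

Lemma Mhh a b : M mm (hat a) (hat b) = M0 mm a b.
Proof.
rewrite (Mhatl mmDl) big_nat_recl // [X in _ + X](_ : _ = 0) ?addr0 //.
by apply: big1 => k _; rewrite hatS (M00r mmDr) shn0.
Qed.

Lemma Phi_hat_coef a b c n : (n <= N.+1)%N ->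
  Phi mm (hat a) (hat b) (hat c) n =
  \sum_(i < n.+1) (mm i (mm (n - i) a b) c - mm i a (mm (n - i) b c + mm (n - i) c b)).
Proof.
move=> nN; rewrite /Phi addfE oppfE !Mhh (Mhatr mmDr) (Mhatl mmDl).
rewrite !shsum_coef // => [|j|j]; try exact: M0_trunc.
rewrite -sumrB -(@rev_sum _ n (fun i j => mm i (mm j a b) c - mm i a (mm j b c + mm j c b))).
apply: eq_bigr => j _ /=.
have jn : (j <= n)%N by rewrite -ltnS.
have jN : (j <= N.+1)%N by apply: leq_trans nN.
by rewrite /M0 addfE (leq_trans (leq_subr _ _) nN) jN.
Qed.
End Hat.

Section DHat.
Variables T1 T2 : zmodType.
Variable mr : nat -> T1 -> T1 -> T1.
Hypothesis mrDl : forall i a b c, mr i (a + b) c = mr i a c + mr i b c.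
Hypothesis mrDr : forall i a b c, mr i c (a + b) = mr i c a + mr i c b.
Variable ms : nat -> T2 -> T2 -> T2.
Hypothesis msDl : forall i a b c, ms i (a + b) c = ms i a c + ms i b c.
Hypothesis msDr : forall i a b c, ms i c (a + b) = ms i c a + ms i c b.
Variable ff : nat -> T1 -> T2.
Hypothesis ffD : forall i a b, ff i (a + b) = ff i a + ff i b.

Lemma F0_trunc a : trunc (F0 ff a).
Proof. by move=> m mN; rewrite /F0 leqNgt mN. Qed.

Lemma Dhat_coef a b n : (n <= N.+1)%N ->
  D mr ms ff (hat a) (hat b) n = \sum_(i < n.+1) ff i (mr (n - i) a b)
  - \sum_(i < n.+1) \sum_(j < n.+1) \sum_(k < n.+1 | (i + j + k == n)%N)
      ms i (ff j a) (ff k b).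
Proof.
move=> nN; rewrite /D addfE oppfE (Mhh mrDl mrDr) !(Fhat ffD).
congr (_ - _).
  rewrite /F shsum_coef // => [|j]; last exact: F0_trunc.
  rewrite -(@rev_sum _ n (fun i j => ff i (mr j a b))).
  apply: eq_bigr => j _ /=.
  have jn : (j <= n)%N by rewrite -ltnS.
  have jN : (j <= N.+1)%N by apply: leq_trans nN.
  by rewrite /F0 /M0 (leq_trans (leq_subr _ _) nN) jN.
rewrite -(@tri _ n (fun i j k => ms i (ff j a) (ff k b))) (Mdecl msDl) shsum_coef // => [|j]; last exact: trunc_M.
apply: eq_bigr => j _.
have jn : (j <= n)%N by rewrite -ltnS.
have jN : (j <= N.+1)%N by apply: leq_trans nN.
rewrite (Mhatl msDl) shsum_coef ?(leq_trans (leq_subr _ _) nN) // => [|k]; last exact: M0_trunc.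
apply: eq_bigr => k _ /=.
have kn : (k <= n - j)%N by rewrite -ltnS.
have kN : (k <= N.+1)%N by apply: (leq_trans kn); apply: (leq_trans (leq_subr _ _) nN).
have kN' : (n - j - k <= N.+1)%N.
  by apply: (leq_trans (leq_subr _ _)); apply: (leq_trans (leq_subr _ _) nN).
by rewrite /F0 /M0 jN kN kN'.
Qed.
End DHat.

Section Spec.
Variable K : fieldType.

Lemma klin_add (U V : lmodType K) (g : U -> V) : klinear g -> forall x y, g (x + y) = g x + g y.
Proof. by move=> hg x y; rewrite -{1}[x]scale1r hg scale1r. Qed.

Definition tm (T : lmodType K) (ms : nat -> T -> T -> T) i : T -> T -> T :=
  if (i <= N)%N then ms i else fun _ _ => 0.

Section Alg.
Variable T : lmodType K.
Variable ms : nat -> T -> T -> T.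
Hypothesis msbil : forall i, (i <= N)%N -> kbilinear (ms i).
Hypothesis msdef : forall n, (n <= N)%N -> forall x y z : T,
  \sum_(l < n.+1) ms l (ms (n - l)%N x y) z =
  \sum_(l < n.+1) ms l x (ms (n - l)%N y z + ms (n - l)%N z y).

Lemma tmDl i a b c : tm ms i (a + b) c = tm ms i a c + tm ms i b c.
Proof.
rewrite /tm; case: ifP => iN; last by rewrite addr0.
exact: (klin_add (proj2 (msbil iN) c)).
Qed.
Lemma tmDr i a b c : tm ms i c (a + b) = tm ms i c a + tm ms i c b.
Proof.
rewrite /tm; case: ifP => iN; last by rewrite addr0.
exact: (klin_add (proj1 (msbil iN) c)).
Qed.

Lemma Hhat_alg a b c :
  Phi (tm ms) (hat a) (hat b) (hat c) = top (obs_alg ms N a b c).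
Proof.
apply: funext => n; case: (leqP n N.+1) => nN; last first.
  have tP : trunc (Phi (tm ms) (hat a) (hat b) (hat c)).
    by apply: truncD; [exact: trunc_M | apply: truncN; exact: trunc_M].
  by rewrite tP // trunc_top.
rewrite (Phi_hat_coef tmDl tmDr) //.
have [nlt|neq] : (n <= N)%N \/ n = N.+1.
  by move: nN; rewrite leq_eqVlt ltnS => /orP[/eqP ->|->]; [right|left].
  rewrite /top shnSE [(N < n)%N]ltnNge nlt /=.
  rewrite (eq_bigr (fun i : 'I_n.+1 => ms i (ms (n - i)%N a b) c
     - ms i a (ms (n - i)%N b c + ms (n - i)%N c b))); last first.
    move=> i _; have iN : (i <= N)%N by apply: leq_trans nlt; rewrite -ltnS.
    by rewrite /tm iN (leq_trans (leq_subr _ _) nlt).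
  by rewrite sumrB msdef // subrr.
subst n; rewrite top_coef big_ord_recr /= big_ord_recl /=.
have ms0l x : ms 0 0 x = 0.
  by apply: dbl0; rewrite -(klin_add (proj2 (msbil (leq0n N)) x)) addr0.
have ms0r x : ms 0 x 0 = 0.
  by apply: dbl0; rewrite -(klin_add (proj1 (msbil (leq0n N)) x)) addr0.
rewrite /tm /= !subn0 ?ltnn ?subnn /= !addr0 ms0l ms0r !subrr add0r addr0.
rewrite /obs_alg -sumrB big_add1 /= big_mkord; apply: eq_bigr => i _.
rewrite /bump leq0n add1n ltn_ord subSS leq_subr.
by [].
Qed.
Lemma comp_alg x y z w : zd3 (ms 0) (ms 0) (ms 0) (obs_alg ms N) x y z w = 0.
Proof.
have PG := Phi_gen tmDl tmDr Hhat_alg.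
pose mm := tm ms.
have FI : M mm (hat x) (Phi mm (hat y) (hat z) (hat w) - Phi mm (hat z) (hat w) (hat y)
   + Phi mm (hat z) (hat y) (hat w) - Phi mm (hat w) (hat z) (hat y))
   - Phi mm (M mm (hat x) (hat y)) (hat z) (hat w)
   + Phi mm (hat x) (M mm (hat y) (hat z) + M mm (hat z) (hat y)) (hat w)
   - Phi mm (hat x) (hat y) (M mm (hat z) (hat w) + M mm (hat w) (hat z))
   + M mm (Phi mm (hat x) (hat y) (hat z)) (hat w) = 0.
  by rewrite /Phi !(MDl tmDl, MDr tmDr, MNl tmDl, MNr tmDr) !(opprD, opprK); canc.
rewrite !PG !hat0E !addfE !Mcoef0 in FI.
rewrite !hat0R -!topN -!topD (Mtopr tmDr) (Mtopl tmDl) ?hat0E ?hat0R -?topN -?topD in FI.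
move/(congr1 (fun s => s N.+1)): FI; rewrite top_coef zerofE /mm /tm /=.
by rewrite /zd3.
Qed.
End Alg.
Lemma drop_last3 (V : zmodType) n c (G : nat -> nat -> nat -> V) :
  (forall i j k, [|| i == n, j == n | k == n] -> G i j k = 0) ->
  \sum_(i < n.+1) \sum_(j < n.+1) \sum_(k < n.+1 | (i + j + k == c)%N) G i j k =
  \sum_(i < n) \sum_(j < n) \sum_(k < n | (i + j + k == c)%N) G i j k.
Proof.
move=> H.
rewrite big_ord_recr /= [X in _ + X](_ : _ = 0) ?addr0; last first.
  by apply: big1 => j _; apply: big1 => k _; apply: H; rewrite eqxx.
apply: eq_bigr => i _.
rewrite big_ord_recr /= [X in _ + X](_ : _ = 0) ?addr0; last first.
  by apply: big1 => k _; apply: H; rewrite eqxx orbT.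
apply: eq_bigr => j _.
rewrite big_mkcond big_ord_recr /= [X in _ + X](_ : _ = 0) ?addr0; last first.
  by rewrite H ?eqxx ?orbT //; case: ifP.
by rewrite -big_mkcond.
Qed.

Definition tf (R S : lmodType K) (fs : nat -> R -> S) i : R -> S :=
  if (i <= N)%N then fs i else fun _ => 0.

Section Mor.
Variables R S : lmodType K.
Variable mRs : nat -> R -> R -> R.
Variable mSs : nat -> S -> S -> S.
Variable fs : nat -> R -> S.
Hypothesis mRbil : forall i, (i <= N)%N -> kbilinear (mRs i).
Hypothesis mSbil : forall i, (i <= N)%N -> kbilinear (mSs i).
Hypothesis flin : forall i, (i <= N)%N -> klinear (fs i).
Hypothesis mRdef : forall n, (n <= N)%N -> forall x y z : R,
  \sum_(l < n.+1) mRs l (mRs (n - l)%N x y) z =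
  \sum_(l < n.+1) mRs l x (mRs (n - l)%N y z + mRs (n - l)%N z y).
Hypothesis mSdef : forall n, (n <= N)%N -> forall x y z : S,
  \sum_(l < n.+1) mSs l (mSs (n - l)%N x y) z =
  \sum_(l < n.+1) mSs l x (mSs (n - l)%N y z + mSs (n - l)%N z y).
Hypothesis fdef : forall n, (n <= N)%N -> forall x y : R,
  \sum_(i < n.+1) fs i (mRs (n - i)%N x y) =
  \sum_(i < n.+1) \sum_(j < n.+1) \sum_(k < n.+1 | (i + j + k == n)%N)
     mSs i (fs j x) (fs k y).

Lemma tfD i a b : tf fs i (a + b) = tf fs i a + tf fs i b.
Proof.
rewrite /tf; case: ifP => iN; last by rewrite addr0.
exact: (klin_add (flin iN)).
Qed.

Let RDl := tmDl mRbil.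
Let RDr := tmDr mRbil.
Let SDl := tmDl mSbil.
Let SDr := tmDr mSbil.

Lemma Dhat_mor a b : D (tm mRs) (tm mSs) (tf fs) (hat a) (hat b)
  = top (- obs_mor mRs mSs fs N a b).
Proof.
apply: funext => n; case: (leqP n N.+1) => nN; last first.
  have tD : trunc (D (tm mRs) (tm mSs) (tf fs) (hat a) (hat b)).
    apply: truncD; last by apply: truncN; exact: trunc_M.
    by apply: trunc_shsum => j; exact: F0_trunc.
  by rewrite tD // trunc_top.
rewrite (Dhat_coef RDl RDr SDl tfD) //.
have [nlt|neq] : (n <= N)%N \/ n = N.+1.
  by move: nN; rewrite leq_eqVlt ltnS => /orP[/eqP ->|->]; [right|left].
  rewrite /top shnSE [(N < n)%N]ltnNge nlt /=.
  apply/eqP; rewrite subr_eq0; apply/eqP.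
  rewrite (eq_bigr (fun i : 'I_n.+1 => fs i (mRs (n - i)%N a b))); last first.
    move=> i _; have iN : (i <= N)%N by apply: leq_trans nlt; rewrite -ltnS.
    by rewrite /tf /tm iN (leq_trans (leq_subr _ _) nlt).
  rewrite fdef //; apply: eq_bigr => i _; apply: eq_bigr => j _; apply: eq_bigr => k _.
  have iN : (i <= N)%N by apply: leq_trans nlt; rewrite -ltnS.
  have jN : (j <= N)%N by apply: leq_trans nlt; rewrite -ltnS.
  have kN : (k <= N)%N by apply: leq_trans nlt; rewrite -ltnS.
  by rewrite /tf /tm iN jN kN.
subst n; rewrite top_coef /obs_mor opprB.
have f00 : fs 0 0 = 0.
  by apply: dbl0; rewrite -(klin_add (flin (leq0n N))) addr0.
congr (_ - _).
  rewrite big_ord_recr /= big_ord_recl /= /tf /tm /= !subn0 ?ltnn ?subnn /= f00 !addr0 add0r.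
  rewrite big_add1 /= big_mkord; apply: eq_bigr => i _.
  by rewrite /bump leq0n add1n ltn_ord subSS leq_subr.
rewrite (@drop_last3 _ N.+1 N.+1 (fun i j k => tm mSs i (tf fs j a) (tf fs k b))) => [|i j k /or3P [] /eqP ->]; first last.
- by rewrite /tf ltnn (mm0r SDr).
- by rewrite /tf ltnn (mm0l SDl).
- by rewrite /tm ltnn.
apply: eq_bigr => i _; apply: eq_bigr => j _; apply: eq_bigr => k _.
have iN : (i <= N)%N by rewrite -ltnS.
have jN : (j <= N)%N by rewrite -ltnS.
have kN : (k <= N)%N by rewrite -ltnS.
by rewrite /tf /tm iN jN kN.
Qed.

Lemma comp_mor x y z : fs 0 (obs_alg mRs N x y z)
  - obs_alg mSs N (fs 0 x) (fs 0 y) (fs 0 z)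
  - zd2 (mRs 0) (fun r s => mSs 0 (fs 0 r) s) (fun s r => mSs 0 s (fs 0 r))
      (obs_mor mRs mSs fs N) x y z = 0.
Proof.
have PGR := Phi_gen RDl RDr (Hhat_alg mRbil mRdef).
have PGS := Phi_gen SDl SDr (Hhat_alg mSbil mSdef).
have DG := D_gen RDl RDr SDl SDr tfD Dhat_mor.
pose MR := M (tm mRs); pose MS := M (tm mSs); pose FF := F (tf fs).
pose DD := D (tm mRs) (tm mSs) (tf fs).
have FI : FF (Phi (tm mRs) (hat x) (hat y) (hat z))
    - Phi (tm mSs) (FF (hat x)) (FF (hat y)) (FF (hat z))
  = DD (MR (hat x) (hat y)) (hat z) + MS (DD (hat x) (hat y)) (FF (hat z))
    - DD (hat x) (MR (hat y) (hat z) + MR (hat z) (hat y))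
    - MS (FF (hat x)) (DD (hat y) (hat z) + DD (hat z) (hat y)).
  rewrite /DD /D /Phi /MR /MS /FF !(MDl RDl, MDr RDr, MNl RDl, MNr RDr, MDl SDl, MDr SDr,
    MNl SDl, MNr SDr, FD tfD, FN tfD).
  zeq.
rewrite /DD PGR PGS !DG /FF /MR /MS (Ftop tfD) !Fcoef0 !Mcoef0 !addfE ?hat0E ?hat0R in FI.
rewrite -?topN -?topD (Mtopl SDl) (Mtopr SDr) ?Fcoef0 ?hat0E ?hat0R -?topN -?topD in FI.
move/(congr1 (fun s => s N.+1)): FI; rewrite !top_coef ?Mcoef0R ?hat0E /tm /tf /= => FI.
have S0Dl a b c : mSs 0 (a + b) c = mSs 0 a c + mSs 0 b c.
  exact: (klin_add (proj2 (mSbil (leq0n N)) c)).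
have S0Dr a b c : mSs 0 c (a + b) = mSs 0 c a + mSs 0 c b.
  exact: (klin_add (proj1 (mSbil (leq0n N)) c)).
have S0Nl a c : mSs 0 (- a) c = - mSs 0 a c.
  exact: (@mmNl _ (fun _ => mSs 0) (fun _ => S0Dl) 0%N a c).
have S0Nr a c : mSs 0 c (- a) = - mSs 0 c a.
  exact: (@mmNr _ (fun _ => mSs 0) (fun _ => S0Dr) 0%N a c).
rewrite FI /zd2; move: (obs_mor _ _ _ _) => Ob; rewrite !(S0Dl, S0Dr, S0Nl, S0Nr).
zeq.
Qed.
End Mor.
End Spec.

End Dev.

Unset Implicit Arguments.

Theorem lemma5p1 (K : fieldType) (R S : lmodType K)
  (mR : R -> R -> R) (mS : S -> S -> S) (f : R -> S) (N : nat)
  (mRs : nat -> R -> R -> R) (mSs : nat -> S -> S -> S) (fs : nat -> R -> S) :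
  zinbiel_algebra mR -> zinbiel_algebra mS -> zinbiel_morphism mR mS f ->
  (0 < N)%N ->
  zinb_deformation mR mS f N mRs mSs fs ->
  let ObR := obs_alg mRs N in
  let ObS := obs_alg mSs N in
  let Obf := obs_mor mRs mSs fs N in
  [/\ (forall x y z w : R, zd3 mR mR mR ObR x y z w = 0),
      (forall x y z w : S, zd3 mS mS mS ObS x y z w = 0)
    & (forall x y z : R,
         f (ObR x y z) - ObS (f x) (f y) (f z)
         - zd2 mR (fun r s => mS (f r) s) (fun s r => mS s (f r)) Obf x y z
         = 0)].
Proof.
move=> _ _ _ _ [[e1 e2 e3] [Hlin HR HS Hf]] ObR ObS Obf.
have mRbil i : (i <= N)%N -> kbilinear (mRs i) by move=> iN; case: (Hlin i iN).
have mSbil i : (i <= N)%N -> kbilinear (mSs i) by move=> iN; case: (Hlin i iN).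
have flin i : (i <= N)%N -> klinear (fs i) by move=> iN; case: (Hlin i iN).
split.
- move=> x y z w; rewrite /ObR -e1; exact: (comp_alg mRbil HR).
- move=> x y z w; rewrite /ObS -e2; exact: (comp_alg mSbil HS).
- move=> x y z; rewrite /ObR /ObS /Obf -e1 -e2 -e3.
  exact: (comp_mor mRbil mSbil flin HR HS Hf).
Qed.
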